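(* Let $V\in(\mathbb{R}\cup\{-\infty\})^{n\times p}$ have no row and no column identically equal to $-\infty$, and let $T$ be the operator $$T_i(x)=\inf_{k\in[p],\,V_{ik}\neq-\infty}\Big[-V_{ik}+\max_{j\in[n],\,j\neq i}(V_{jk}+x_j)\Big],\qquad i\in[n].$$ The following assertions are equivalent: (1) the inner radius of $\operatorname{Col}(V)$ is $+\infty$; (2) no part of $(\mathbb{R}\cup\{-\infty\})^n$ is left invariant by $T$; (3) $T^n(0)$ is the vector identically equal to $-\infty$; (4) $\rho(T)=-\infty$.
   Context: $\mathbb{R}_{\max}=\mathbb{R}\cup\{-\infty\}$, with $-\infty+c=-\infty$ and $\max\emptyset=-\infty$. $\operatorname{Col}(V)=\{Vx:x\in\mathbb{R}_{\max}^p\}$ with $(Vx)_i=\max_k(V_{ik}+x_k)$. Hilbert's projective metric: $d(x,y)=\inf\{\lambda-\mu:\lambda,\mu\in\mathbb{R},\ \mu+y_i\le x_i\le\lambda+y_i\ \forall i\}$; for $a\in\mathbb{R}^n$, $B(a,r)=\{x:d(a,x)\le r\}$. The inner radius of $\operatorname{Col}(V)$ is the supremum of the radii $r$ of balls $B(a,r)$ with $a\in\mathbb{R}^n$ included in $\operatorname{Col}(V)$. For a nonempty $I\subset[n]$, the part $P_I$ is the set of vectors of $\mathbb{R}_{\max}^n$ whose support $\{i: x_i\neq-\infty\}$ equals $I$; $P_I$ is left invariant by $T$ if $T(P_I)\subset P_I$. $T^n$ is the $n$-th iterate. $\rho(T)=\sup\{\lambda\in\mathbb{R}\cup\{-\infty\}:\exists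 u\not\equiv-\infty,\ T(u)=\lambda+u\}$. *)

(* Defs.v *)
(* with MathComp-Analysis extended reals \bar R.
   R_max = R ∪ {-oo} is modelled inside \bar R as the elements different from +oo. *)
From HB Require Import structures.
From mathcomp Require Import all_boot all_order all_algebra.
From mathcomp Require Import all_classical all_reals ereal.
Set Implicit Arguments. Unset Strict Implicit. Unset Printing Implicit Defensive.
Import Order.TTheory GRing.Theory Num.Theory.
Local Open Scope classical_set_scope.
Local Open Scope ring_scope.
Local Open Scope ereal_scope.

Section Defs.
Variable R : realType.

Definition in_Rmax (x : \bar R) : Prop := x != +oo.

Definition Rmax_vec (m : nat) (x : 'I_m -> \bar R) : Prop :=
  forall i, in_Rmax (x i).

Definition mp_mulv (n p : nat) (V : 'I_n -> 'I_p -> \bar R) (x : 'I_p -> \bar R)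
  : 'I_n -> \bar R :=
  fun i => \big[maxe/-oo]_(k < p) (V i k + x k).

Definition Col (n p : nat) (V : 'I_n -> 'I_p -> \bar R) : set ('I_n -> \bar R) :=
  [set y | exists x, Rmax_vec x /\ y = mp_mulv V x].

Definition hilbert_d (n : nat) (x y : 'I_n -> \bar R) : \bar R :=
  ereal_inf [set z | exists l m : R, z = ((l - m)%R)%:E /\
     forall i, (m%:E + y i <= x i) /\ (x i <= l%:E + y i)].

Definition hball (n : nat) (a : 'I_n -> R) (r : R) : set ('I_n -> \bar R) :=
  [set x | Rmax_vec x /\ hilbert_d (fun i => (a i)%:E) x <= r%:E].

Definition inner_radius (n p : nat) (V : 'I_n -> 'I_p -> \bar R) : \bar R :=
  ereal_sup [set r%:E | r in [set r : R | (0 <= r)%R /\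
     exists a : 'I_n -> R, hball a r `<=` Col V]].

Definition Top (n p : nat) (V : 'I_n -> 'I_p -> \bar R) (x : 'I_n -> \bar R)
  : 'I_n -> \bar R :=
  fun i => \big[mine/+oo]_(k < p | V i k != -oo)
             (- V i k + \big[maxe/-oo]_(j < n | j != i) (V j k + x j)).

Definition supp (n : nat) (x : 'I_n -> \bar R) : {set 'I_n} :=
  [set i | x i != -oo].

Definition part (n : nat) (I : {set 'I_n}) : set ('I_n -> \bar R) :=
  [set x | Rmax_vec x /\ supp x = I].

Definition left_invariant (n : nat) (T : ('I_n -> \bar R) -> ('I_n -> \bar R))
  (I : {set 'I_n}) : Prop :=
  T @` part I `<=` part I.

Definition rho (n : nat) (T : ('I_n -> \bar R) -> ('I_n -> \bar R)) : \bar R :=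
  ereal_sup [set l | in_Rmax l /\ exists u : 'I_n -> \bar R,
     Rmax_vec u /\ (exists i, u i != -oo) /\ T u = (fun i => l + u i)].

End Defs.

(* Main.v *)
Require Import Defs.
From HB Require Import structures.
From mathcomp Require Import all_boot all_order all_algebra.
From mathcomp Require Import all_classical all_reals ereal.
From mathcomp Require Import lra zify.
Import Order.TTheory GRing.Theory Num.Theory.
Local Open Scope classical_set_scope.
Local Open Scope ereal_scope.

Section Graph.
Local Open Scope ring_scope.
Variables (R : realType) (n : nat) (E : rel 'I_n) (w : 'I_n -> 'I_n -> R).

Definition gwalk (s : nat -> 'I_n) (L : nat) := forall t, (t < L)%N -> E (s t) (s t.+1).
Definition gwt (s : nat -> 'I_n) (L : nat) : R := \sum_(0 <= t < L) w (s t) (s t.+1).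

Definition cyc_set : set R := [set x | exists s L,
  [/\ gwalk s L, (0 < L <= n)%N, s L = s 0 & x = gwt s L / L%:R]].
Definition lam := sup cyc_set.

Lemma pigeon (f : nat -> 'I_n) : exists p q, [/\ (p < q)%N, (q <= n)%N & f p = f q].
Proof.
have ninj : ~ injective (fun x : 'I_n.+1 => f x).
  by move=> /leq_card; rewrite !card_ord ltnn.
case: (pselect (exists p q, [/\ (p < q)%N, (q <= n)%N & f p = f q])) => // H.
exfalso; apply: ninj => x y Hxy; apply/val_inj.
case: (ltngtP x y) => [lt|gt|//].
- by exfalso; apply: H; exists x, y; split => //; rewrite -ltnS.
- by exfalso; apply: H; exists y, x; split => //; rewrite -ltnS.
Qed.

Lemma wbound : exists M, forall i j, w i j <= M.
Proof.
exists (\big[Order.max/0]_(ij : 'I_n * 'I_n) w ij.1 ij.2) => i j.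
exact: (le_bigmax 0 (fun ij : 'I_n * 'I_n => w ij.1 ij.2) (i, j)).
Qed.

Lemma gwt_le s L M : (forall t, (t < L)%N -> w (s t) (s t.+1) <= M) ->
  gwt s L <= L%:R * M.
Proof.
move=> H; rewrite /gwt mulr_natl -[L in M *+ L]subn0 -sumr_const_nat.
by apply: ler_sum_nat => t /andP [_ tL]; apply: H.
Qed.

Hypotheses (K : pred 'I_n) (HEK : forall i j, E i j -> K j)
  (HKs : forall i, K i -> exists j, E i j) (i0 : 'I_n) (Hi0 : K i0).

Lemma cyc_ne : cyc_set !=set0.
Proof.
have : forall i, exists j, K i -> E i j.
  move=> i; case Ki: (K i); last by exists i.
  by have [j Hj] := HKs i Ki; exists j.
move=> /choice [f Hf].
pose s t := iter t f i0.
have Ks : forall t, K (s t).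
  by elim=> [|t IH] //=; apply: (HEK _ _ (Hf _ IH)).
have [p [q [pq qn spq]]] := pigeon s.
pose c t := s (p + t)%N.
exists (gwt c (q - p) / (q - p)%:R), c, (q - p)%N; split.
- by move=> t _; rewrite /c addnS; apply: Hf.
- by rewrite subn_gt0 pq /= (leq_trans (leq_subr _ _) qn).
- by rewrite /c subnKC ?(ltnW pq) // addn0.
- done.
Qed.

Lemma cyc_ub : exists M, ubound cyc_set M.
Proof.
have [M HM] := wbound; exists M => x [s [L [Hw /andP [L0 Ln] Hc ->]]].
rewrite ler_pdivrMr ?ltr0n // mulrC.
by apply: gwt_le => t _; apply: HM.
Qed.

Lemma cyc_has_sup : has_sup cyc_set.
Proof. by split; [apply: cyc_ne | have [M HM] := cyc_ub; exists M]. Qed.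

Lemma cyc_le s L : gwalk s L -> (0 < L <= n)%N -> s L = s 0 -> gwt s L <= L%:R * lam.
Proof.
move=> Hw HL Hc; have /andP [L0 _] := HL.
have : gwt s L / L%:R <= lam.
  by apply: sup_upper_bound; [apply: cyc_has_sup | exists s, L].
by rewrite ler_pdivrMr ?ltr0n // mulrC.
Qed.

Lemma lam_min (lam' : R) (u : 'I_n -> R) :
  (forall i j, E i j -> w i j + u j <= lam' + u i) -> lam <= lam'.
Proof.
move=> Hu; apply: ge_sup; first exact: cyc_ne.
move=> x [s [L [Hw /andP [L0 Ln] Hc ->]]].
rewrite ler_pdivrMr ?ltr0n //.
have -> : lam' * L%:R = \sum_(0 <= t < L) (lam' - (u (s t.+1) - u (s t))).
  rewrite sumrB sumr_const_nat subn0 (telescope_sumr (fun t => u (s t))) //.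
  by rewrite Hc subrr subr0 mulr_natr.
apply: ler_sum_nat => t /andP [_ tL].
have := Hu _ _ (Hw t tL); lra.
Qed.

Lemma cyc_max_bound : exists M, forall L s, gwalk s L -> gwt s L - L%:R * lam <= n%:R * M.
Proof.
have [M HM] := wbound.
exists (Num.max (M - lam) 0).
elim/ltn_ind => L IH s Hw.
case: (ltnP L n) => Ln.
- have -> : gwt s L - L%:R * lam = \sum_(0 <= t < L) (w (s t) (s t.+1) - lam).
    by rewrite sumrB sumr_const_nat subn0 mulr_natl.
  apply: (@le_trans _ _ (L%:R * Num.max (M - lam) 0)).
    rewrite mulr_natl -[L in _ *+ L]subn0 -sumr_const_nat.
    apply: ler_sum_nat => t _; rewrite le_max; apply/orP; left.
    by rewrite lerD2r.
  by apply: ler_wpM2r; [rewrite le_max lexx orbT | rewrite ler_nat ltnW].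
- have [p [q [pq qn spq]]] := pigeon s.
  pose d := (q - p)%N.
  pose c t := s (p + t)%N.
  have d0 : (0 < d)%N by rewrite subn_gt0.
  have qL : (q <= L)%N by apply: leq_trans Ln.
  have pd : (p + d = q)%N by rewrite subnKC // ltnW.
  have Lg : (d <= L)%N by apply: leq_trans (leq_subr _ _) qL.
  pose s' t := if (t <= p)%N then s t else s (t + d)%N.
  have s'E : forall t, (p <= t)%N -> s' t = s (t + d)%N.
    move=> t pt; rewrite /s'; case: ifP => // tp.
    have -> : t = p by apply/eqP; rewrite eqn_leq tp pt.
    by rewrite pd.
  have Hc : gwt c d <= d%:R * lam.
    apply: cyc_le.
    - move=> t td; rewrite /c addnS; apply: Hw; apply: (leq_trans _ qL).
      by rewrite -pd ltn_add2l.
    - by rewrite d0 /= (leq_trans (leq_subr _ _) qn).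
    - by rewrite /c pd addn0.
  have Hw' : gwalk s' (L - d).
    move=> t tL; have tdL : (t + d < L)%N by rewrite addnC -ltn_subRL.
    case: (ltnP t p) => tp.
    + rewrite /s' ltnW // tp; apply: Hw.
      by apply: leq_trans tdL; rewrite ltnS leq_addr.
    + by rewrite !s'E // ?(leq_trans tp) // addSn; apply: Hw.
  have Heq : gwt s L = gwt s' (L - d) + gwt c d.
    rewrite /gwt (big_cat_nat (leq0n p) (leq_trans (ltnW pq) qL)).
    rewrite (big_cat_nat (ltnW pq) qL) /=.
    rewrite [X in _ = X + _](big_cat_nat (leq0n p)) /=; last first.
      by rewrite leq_subRL // addnC pd.
    have -> : \sum_(0 <= t < p) w (s' t) (s' t.+1) = \sum_(0 <= t < p) w (s t) (s t.+1).
      apply: eq_big_nat => t /andP [_ tp].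
      by rewrite /s' ltnW // tp.
    have -> : \sum_(p <= t < L - d) w (s' t) (s' t.+1) = \sum_(q <= t < L) w (s t) (s t.+1).
      rewrite -{1}pd -{2}[L](subnK Lg) [in RHS]big_addn.
      rewrite addnK; apply: eq_big_nat => t /andP [pt _].
      by rewrite !s'E ?(leq_trans pt) // addSn.
    have -> : \sum_(0 <= t < d) w (c t) (c t.+1) = \sum_(p <= t < q) w (s t) (s t.+1).
      rewrite -pd -{1}[p]add0n big_addn addKn.
      by apply: eq_big_nat => t _; rewrite /c (addnC t p) addnS.
    by rewrite -addrA [X in _ = _ + X]addrC.
  have := IH (L - d)%N _ s' Hw'.
  rewrite -subn_gt0 subKn // => /(_ d0).
  rewrite Heq natrB //; lra.
Qed.

Definition pot_set i : set R := [set x | exists s L, [/\ gwalk s L, s 0 = i & x = gwt s L - L%:R * lam]].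
Definition pot i := sup (pot_set i).

Lemma pot_ne i : pot_set i !=set0.
Proof.
exists 0, (fun _ => i), 0%N; split => //.
by rewrite /gwt big_geq // mulr0n mul0r subr0.
Qed.

Lemma pot_has_sup i : has_sup (pot_set i).
Proof.
split; first exact: pot_ne.
have [M HM] := cyc_max_bound; exists (n%:R * M).
by move=> x [s [L [Hw _ ->]]]; apply: HM.
Qed.

Lemma pot_ineq i j : E i j -> w i j + pot j <= lam + pot i.
Proof.
move=> Eij.
suff : pot j <= lam + pot i - w i j by lra.
apply: ge_sup; first exact: pot_ne.
move=> x [s [L [Hw Hs0 ->]]].
pose s2 t := if t is t'.+1 then s t' else i.
have : gwt s2 L.+1 - L.+1%:R * lam <= pot i.
  apply: sup_upper_bound; first exact: pot_has_sup.
  exists s2, L.+1; split => //.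
  by case=> [|t] /= tL; [rewrite Hs0 | apply: Hw].
rewrite /gwt big_nat_recl //= Hs0 -addn1 natrD.
rewrite -/(gwt s L); lra.
Qed.

End Graph.

Section Game.
Variables (R : realType) (n p : nat) (V : 'I_n -> 'I_p -> \bar R).
Hypotheses (HV : forall i k, V i k != +oo)
  (Hrow : forall i, exists k, V i k != -oo)
  (Hcol : forall k, exists i, V i k != -oo).

Local Notation T := (Top V).

Lemma finV {i k} : V i k != -oo -> exists v : R, V i k = v%:E.
Proof. by move=> vk; exists (fine (V i k)); rewrite fineK // fin_numE vk HV. Qed.

Lemma mine_addr (a b : \bar R) (c : R) : mine a b + c%:E = mine (a + c%:E) (b + c%:E).
Proof. by rewrite !minEle leeD2rE //; case: ifP. Qed.

Lemma maxe_addr (a b : \bar R) (c : R) : maxe a b + c%:E = maxe (a + c%:E) (b + c%:E).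
Proof. by rewrite !maxEle leeD2rE //; case: ifP. Qed.

Lemma Top_mono x y : (forall j, x j <= y j) -> forall i, T x i <= T y i.
Proof.
move=> H i; rewrite /Top; apply/bigmin_geP; split; first exact: leey.
move=> k vk; apply/bigmin_leP; right; exists k => //.
apply: leeD2l; apply/bigmax_leP; split; first exact: leNye.
move=> j jn; apply/bigmax_geP; right; exists j => //; exact: leeD2l.
Qed.

Lemma Top_shift x (c : R) i : T (fun j => x j + c%:E) i = T x i + c%:E.
Proof.
rewrite /Top (big_morph (fun y => y + c%:E) (fun a b => mine_addr a b c) (erefl _)).
apply: eq_bigr => k _; rewrite -addeA; congr (_ + _).
rewrite (big_morph (fun y => y + c%:E) (fun a b => maxe_addr a b c) (erefl _)).
by apply: eq_bigr => j _; rewrite addeA.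
Qed.

Lemma iter_shift m x (c : R) :
  iter m T (fun j => x j + c%:E) = (fun j => iter m T x j + c%:E).
Proof.
elim: m => [|m IH] //=; apply: funext => i; by rewrite IH Top_shift.
Qed.

Lemma iter_mono m x y : (forall j, x j <= y j) -> forall j, iter m T x j <= iter m T y j.
Proof.
move=> H; elim: m => [|m IH] //= j; exact: Top_mono.
Qed.

Lemma Top_ninf_of y i k : V i k != -oo ->
  (forall j, j != i -> V j k != -oo -> y j = -oo) -> T y i = -oo.
Proof.
move=> vk H; apply/eqP; rewrite -leeNy_eq.
apply/bigmin_leP; right; exists k => //.
have -> : \big[maxe/-oo]_(j < n | j != i) (V j k + y j) = -oo.
  apply/eqP; rewrite -leeNy_eq; apply/bigmax_leP; split => // j ji.
  case: (eqVneq (V j k) -oo) => [->|vj]; first by rewrite addNye.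
  by rewrite (H j ji vj) addeNy.
by rewrite addeNy.
Qed.

Lemma Top_fin_of y i : (forall k, V i k != -oo ->
  exists j, [/\ j != i, V j k != -oo & y j != -oo]) -> T y i != -oo.
Proof.
move=> H; rewrite /Top; apply: (big_ind (fun z => z != -oo)) => //.
  by move=> a b Ha Hb; rewrite minEle; case: ifP.
move=> k vk; have [j [ji vj yj]] := H k vk.
rewrite adde_eq_ninfty negb_or; apply/andP; split.
  by have [v ->] := finV vk.
apply: contra yj => /eqP Hm.
have : V j k + y j <= -oo.
  by rewrite -Hm; apply/bigmax_geP; right; exists j.
by rewrite leeNy_eq adde_eq_ninfty (negbTE vj).
Qed.

Lemma Top_noinf y i : Rmax_vec y -> T y i != +oo.
Proof.
move=> Hy; have [k vk] := Hrow i.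
have Ht : - V i k + \big[maxe/-oo]_(j < n | j != i) (V j k + y j) != +oo.
  have [v ->] := finV vk.
  have : \big[maxe/-oo]_(j < n | j != i) (V j k + y j) != +oo.
    apply: (big_ind (fun z => z != +oo)) => //.
      by move=> a b Ha Hb; rewrite maxEle; case: ifP.
    move=> j _; case: (eqVneq (V j k) -oo) => [->|vj]; first by rewrite addNye.
    have [v' ->] := finV vj; move: (Hy j); rewrite /in_Rmax.
    by case: (y j).
  by case: (\big[maxe/-oo]_(j < n | j != i) (V j k + y j)).
apply/negP => /eqP Heq.
have : +oo <= - V i k + \big[maxe/-oo]_(j < n | j != i) (V j k + y j).
  by rewrite -Heq /Top; apply/bigmin_leP; right; exists k.
by rewrite leye_eq (negbTE Ht).
Qed.

Lemma Rmax_Top y : Rmax_vec y -> Rmax_vec (T y).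
Proof. by move=> Hy i; apply: Top_noinf. Qed.

Lemma Rmax_iter m y : Rmax_vec y -> Rmax_vec (iter m T y).
Proof. by move=> Hy; elim: m => [|m IH] //=; apply: Rmax_Top. Qed.

Lemma Top_fin_ex y i k : T y i != -oo -> V i k != -oo ->
  exists j, [/\ j != i, V j k != -oo & y j != -oo].
Proof.
move=> Hne vk.
case: (pselect (exists j, [/\ j != i, V j k != -oo & y j != -oo])) => // H.
exfalso; move: Hne; rewrite (@Top_ninf_of y i k vk) // => j ji vj.
case: (eqVneq (y j) -oo) => // yj; exfalso; apply: H; by exists j.
Qed.

Lemma Top_ninf_ex y i : T y i = -oo -> exists k, V i k != -oo /\
  (forall j, j != i -> V j k != -oo -> y j = -oo).
Proof.
move=> Heq.
case: (pselect (exists k, V i k != -oo /\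
  (forall j, j != i -> V j k != -oo -> y j = -oo))) => // H.
exfalso; have : T y i != -oo; last by rewrite Heq.
apply: Top_fin_of => k vk.
case: (pselect (exists j, [/\ j != i, V j k != -oo & y j != -oo])) => // Hj.
exfalso; apply: H; exists k; split => // j ji vj.
case: (eqVneq (y j) -oo) => // yj; exfalso; apply: Hj; by exists j.
Qed.

Lemma supp_sub x y : {subset supp x <= supp y} -> {subset supp (T x) <= supp (T y)}.
Proof.
move=> H i; rewrite !inE => Hx; apply: Top_fin_of => k vk.
have [j [ji vj xj]] := Top_fin_ex _ _ _ Hx vk.
exists j; split => //.
by have := H j; rewrite !inE => /(_ xj).
Qed.

Lemma supp_eq x y : supp x = supp y -> supp (T x) = supp (T y).
Proof.
move=> H; apply/setP => i; apply/idP/idP; apply: supp_sub => j; by rewrite H.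
Qed.

Definition yit m := iter m T (fun _ => 0).
Definition Sit m := supp (yit m).

Lemma Sit_dec m : {subset Sit m.+1 <= Sit m}.
Proof.
elim: m => [|m IH] i.
  by rewrite /Sit !inE /yit /=.
exact: supp_sub IH i.
Qed.

Lemma P1_P2 : (forall I : {set 'I_n}, I != finset.set0 -> ~ left_invariant T I) ->
  iter n T (fun _ => 0) = (fun _ => -oo).
Proof.
move=> HP1.
have key : forall m, Sit m = finset.set0 \/ (#|Sit m| + m <= n)%N.
  elim=> [|m IH].
    by right; rewrite addn0; apply: leq_trans (max_card _) _; rewrite card_ord.
  have sub : Sit m.+1 \subset Sit m by apply/fintype.subsetP; apply: Sit_dec.
  case: IH => [H0|Hc].
    left; apply/eqP; rewrite -finset.subset0 -H0 //.
  case: (eqVneq (Sit m) finset.set0) => [H0|Hne]; first by left;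
    apply/eqP; rewrite -finset.subset0 -H0.
  case: (eqVneq (Sit m.+1) (Sit m)) => [Heq|Hneq].
    exfalso; apply: (HP1 _ Hne) => z [x [Hx Hs] <-]; split.
      exact: Rmax_Top.
    by rewrite -Heq /Sit /yit /= (supp_eq _ _ Hs).
  right; have : (#|Sit m.+1| < #|Sit m|)%N.
    by apply: proper_card; rewrite finset.properEneq Hneq sub.
  move: Hc; rewrite addnS; lia.
have [H0|Hc] := key n.
  apply: funext => i; apply/eqP.
  have : i \notin Sit n by rewrite H0 inE.
  by rewrite inE negbK.
have H0 : Sit n = finset.set0 by apply: cards0_eq; lia.
apply: funext => i; apply/eqP.
have : i \notin Sit n by rewrite H0 inE.
by rewrite inE negbK.
Qed.


Lemma Wbound : exists W : R, (0 <= W)%R /\ forall i j k,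
  (`|fine (V j k) - fine (V i k)| <= W)%R.
Proof.
pose f (t : 'I_n * 'I_n * 'I_p) := `|fine (V t.1.2 t.2) - fine (V t.1.1 t.2)|%R.
exists (\big[Order.max/0%R]_t f t); split.
  apply: (big_ind (fun z : R => 0 <= z)%R).
  - by [].
  - by move=> a b Ha Hb; rewrite le_max Ha.
  - by move=> t _; rewrite /f normr_ge0.
move=> i j k; exact: (le_bigmax 0%R f ((i, j), k)).
Qed.

Lemma P2_P3 : iter n T (fun _ => 0) = (fun _ => -oo) -> rho T = -oo.
Proof.
move=> H2; apply/eqP; rewrite -leeNy_eq; apply: ge_ereal_sup.
move=> l [Hl [u [Hu [[i0 ui0] Heig]]]].
move: Hl; rewrite /in_Rmax; case: l Heig => [r||] Heig // _.
exfalso.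
have Hit : forall m, iter m T u = (fun i => u i + (m%:R * r)%:E).
  elim=> [|m IH] /=; first by apply: funext => i; rewrite mul0r adde0.
  rewrite IH; apply: funext => i; rewrite Top_shift Heig /=.
  rewrite [r%:E + _]addeC -addeA -EFinD; congr (_ + _%:E).
  by rewrite -addn1 natrD mulrDl mul1r addrC.
have [c Hc] : exists c : R, forall j, u j <= c%:E.
  exists (\big[Order.max/0%R]_j fine (u j)) => j.
  have := le_bigmax 0%R (fun j => fine (u j)) j.
  move: (Hu j); rewrite /in_Rmax; case: (u j) => [x||] //= _ Hx.
  by rewrite leNye.
have Hle : forall j, u j + (- c)%:E <= (fun _ => 0) j.
  move=> j; move: (Hc j); case: (u j) => [x||] //= Hx; last by rewrite leNye.
  by rewrite -EFinD lee_fin subr_le0 -lee_fin.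
have := iter_mono n _ _ Hle i0.
rewrite H2 iter_shift Hit /= leeNy_eq.
have [v ->] : exists v : R, u i0 = v%:E.
  move: (Hu i0) ui0; rewrite /in_Rmax; case: (u i0) => [x||] //; by exists x.
by [].
Qed.


Lemma argmax_ex (I : {set 'I_n}) (f : 'I_n -> R) : I != finset.set0 ->
  exists i0, i0 \in I /\ forall j, j \in I -> (f j <= f i0)%R.
Proof.
move=> /set0Pn [i1 i1I].
have [i0 i0I Heq] := @eq_bigmax _ _ _ (-oo : \bar R) i1 (mem I) (fun i => (f i)%:E) i1I
  (fun i _ => leNye _).
exists i0; split => // j jI.
rewrite -lee_fin -Heq; apply/bigmax_geP; right; by exists j.
Qed.

Lemma col_ball_T (a : 'I_n -> R) (r : R) : (0 <= r)%R -> hball a r `<=` Col V ->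
  forall i, T (fun j => (- a j)%:E) i <= (- a i - r)%:E.
Proof.
move=> r0 Hb i.
pose b j := ((a j + (if j == i then r else 0))%R)%:E.
have : Col V b.
  apply: (Hb b); split; first by move=> j.
  rewrite /hilbert_d; apply: ereal_inf_lbound.
  exists 0%R, (- r)%R; split; first by rewrite sub0r opprK.
  by move=> j; rewrite /b -!EFinD !lee_fin; case: (j == i); split; lra.
move=> [z [Hz Hbz]].
have : (a i + r)%:E <= mp_mulv V z i by rewrite -Hbz /b eqxx.
rewrite /mp_mulv => /bigmax_geP [|[k _ Hk]]; first by rewrite leeNy_eq.
have vk : V i k != -oo.
  by apply/negP => /eqP Hv; move: Hk; rewrite Hv addNye leeNy_eq.
have [vi Evi] := finV vk.
have [zk Ezk] : exists zk, z k = zk%:E.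
  move: (Hz k) Hk; rewrite Evi /in_Rmax; case: (z k) => [x _ _| // | _].
    by exists x.
  by rewrite addeNy leeNy_eq.
rewrite Evi Ezk -EFinD lee_fin in Hk.
have Hj : forall j, j != i -> V j k != -oo ->
    exists vj, V j k = vj%:E /\ (vj + zk <= a j)%R.
  move=> j ji vj; have [v Ev] := finV vj; exists v; split => //.
  have : V j k + z k <= mp_mulv V z j.
    by rewrite /mp_mulv; apply/bigmax_geP; right; exists k.
  by rewrite -Hbz /b (negbTE ji) Ev Ezk -EFinD lee_fin addr0.
rewrite /Top; apply/bigmin_leP; right; exists k => //.
have HM : \big[maxe/-oo]_(j < n | j != i) (V j k + (- a j)%:E) <= (- zk)%:E.
  apply/bigmax_leP; split; first exact: leNye.
  move=> j ji; case: (eqVneq (V j k) -oo) => [->|vj]; first by rewrite addNye leNye.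
  have [v [Ev Hv]] := Hj j ji vj.
  rewrite Ev -EFinD lee_fin; lra.
apply: le_trans (leeD2l _ HM) _.
rewrite Evi -EFinN -EFinD lee_fin; lra.
Qed.

Lemma ball_in_col (a : 'I_n -> R) (r : R) :
  (forall i, T (fun j => (- a j)%:E) i <= (- a i - r - 1)%:E) -> hball a r `<=` Col V.
Proof.
move=> HT b [Hb Hd].
have : hilbert_d (fun i => (a i)%:E) b < (r + 1)%:E.
  by apply: le_lt_trans Hd _; rewrite lte_fin; lra.
move=> /ereal_inf_lt [_ [l [m [-> Hc]]]]; rewrite lte_fin => Hlm.
have Hbf : forall j, exists bj : R, b j = bj%:E.
  move=> j; have [_ Hu] := Hc j; move: (Hb j) Hu; rewrite /in_Rmax.
  case: (b j) => [x _ _||] //; first by exists x.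
have [bb Ebb] : exists bb : 'I_n -> R, forall j, b j = (bb j)%:E.
  by exists (fun j => fine (b j)) => j; have [x ->] := Hbf j.
have Hc' : forall j, (m + bb j <= a j)%R /\ (a j <= l + bb j)%R.
  move=> j; have [H1 H2] := Hc j.
  by rewrite Ebb -!EFinD !lee_fin in H1 H2.
pose z k := \big[mine/+oo]_(j < n | V j k != -oo) (b j - V j k).
exists z; split.
  move=> k; have [j vj] := Hcol k; rewrite /in_Rmax.
  have : z k <= b j - V j k by apply/bigmin_leP; right; exists j.
  have [v Ev] := finV vj; rewrite Ebb Ev -EFinB => H.
  by apply/negP => /eqP Hz; move: H; rewrite Hz leye_eq.
apply: funext => i; apply/eqP; rewrite eq_le; apply/andP; split.
- move/bigmin_leP: (HT i) => [|[k vk Hk]]; first by rewrite leye_eq.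
  have [vi Evi] := finV vk.
  have Hj : forall j, j != i -> V j k != -oo ->
      exists vj, V j k = vj%:E /\ (vj - a j <= vi - a i - r - 1)%R.
    move=> j ji vj; have [v Ev] := finV vj; exists v; split => //.
    have : V j k + (- a j)%:E <= \big[maxe/-oo]_(j0 < n | j0 != i) (V j0 k + (- a j0)%:E).
      by apply/bigmax_geP; right; exists j.
    move: Hk; rewrite Evi Ev.
    case: (\big[maxe/-oo]_(j0 < n | j0 != i) (V j0 k + (- a j0)%:E)) => [M||].
    + by rewrite -EFinN -!EFinD !lee_fin; lra.
    + by rewrite -EFinN addey // leye_eq.
    + by rewrite -EFinD leeNy_eq.
  rewrite /mp_mulv; apply/bigmax_geP; right; exists k => //.
  have Hzk : (bb i - vi)%:E <= z k.
    apply/bigmin_geP; split; first exact: leey.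
    move=> j vj; case: (eqVneq j i) => [->|ji].
      by rewrite Ebb Evi -EFinB.
    have [v [Ev Hv]] := Hj j ji vj.
    rewrite Ebb Ev -EFinB lee_fin.
    have [h1 h2] := Hc' i; have [h3 h4] := Hc' j; lra.
  apply: le_trans _ (leeD2l _ Hzk).
  by rewrite Ebb Evi -EFinD lee_fin; lra.
- rewrite /mp_mulv; apply/bigmax_leP; split; first exact: leNye.
  move=> k _; case: (eqVneq (V i k) -oo) => [->|vk]; first by rewrite addNye leNye.
  have [vi Evi] := finV vk.
  have : z k <= b i - V i k by apply/bigmin_leP; right; exists i.
  rewrite Evi Ebb -EFinB => Hz.
  apply: le_trans (leeD2l _ Hz) _.
  by rewrite -EFinD lee_fin; lra.
Qed.


Lemma radius_of (H : forall r : R, (0 <= r)%R -> exists a, hball a r `<=` Col V) :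
  inner_radius V = +oo.
Proof.
rewrite /inner_radius.
set s := ereal_sup _.
have Hin : forall r : R, (0 <= r)%R -> r%:E <= s.
  move=> r r0; apply: ereal_sup_ubound; exists r => //; split => //; exact: H.
move: Hin; case: s => [x||] // Hin.
  pose y : R := (`|x| + 1)%R.
  have y0 : (0 <= y)%R by rewrite /y; have := normr_ge0 x; lra.
  have := Hin y y0.
  rewrite lee_fin /y => h; have h2 := Num.Theory.ler_norm x; exfalso; lra.
by have := Hin 0%R (lexx _); rewrite leeNy_eq.
Qed.

Lemma P2_P0 : iter n T (fun _ => 0) = (fun _ => -oo) -> inner_radius V = +oo.
Proof.
move=> H2.
have Hex : forall i, exists m, i \notin Sit m.
  by move=> i; exists n; rewrite inE negbK /Sit /yit H2.
pose e i := ex_minn (Hex i).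
have He : forall i, [/\ (0 < e i)%N, i \notin Sit (e i) &
    forall m, i \notin Sit m -> (e i <= m)%N].
  move=> i; rewrite /e; case: ex_minnP => m Hm Hmin.
  split => //; case: m Hm Hmin => // Hm.
  by rewrite inE /Sit /yit /= in Hm.
have Hk : forall i, exists k, V i k != -oo /\
    forall j, j != i -> V j k != -oo -> (e j < e i)%N.
  move=> i; have [e0 Hout Hmin] := He i.
  have : yit (e i) i = -oo by move: Hout; rewrite inE negbK => /eqP.
  rewrite -(prednK e0) /yit /= => /Top_ninf_ex [k [vk Hk]].
  exists k; split => // j ji vj.
  have : j \notin Sit (e i).-1 by rewrite inE negbK /Sit /yit Hk.
  have [_ _ Hmj] := He j; move/Hmj.
  by rewrite -ltnS prednK.
have [W [W0 HW]] := Wbound.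
apply: radius_of => r r0.
pose C := (W + r + 1)%R.
have C0 : (0 <= C)%R by rewrite /C; lra.
exists (fun i => - (C * (e i)%:R))%R; apply: ball_in_col => i.
have -> : (fun j => (- - (C * (e j)%:R))%R%:E) = (fun j => (C * (e j)%:R)%:E).
  by apply: funext => j; rewrite opprK.
rewrite opprK.
have [k [vk Hk']] := Hk i; have [vi Evi] := finV vk.
rewrite /Top; apply/bigmin_leP; right; exists k => //.
rewrite Evi.
have HM : \big[maxe/-oo]_(j < n | j != i) (V j k + (C * (e j)%:R)%:E) <=
    (vi + C * (e i)%:R - r - 1)%:E.
  apply/bigmax_leP; split; first exact: leNye.
  move=> j ji; case: (eqVneq (V j k) -oo) => [->|vj]; first by rewrite addNye leNye.
  have [v Ev] := finV vj; rewrite Ev -EFinD lee_fin.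
  have := HW i j k; rewrite Evi Ev /= => Hvw.
  have := ler_norm (v - vi) => Hn.
  have Hlt : ((e j)%:R + 1 <= (e i)%:R :> R)%R by rewrite natr1 ler_nat; apply: Hk'.
  have hd : (0 <= (e i)%:R - (e j)%:R - 1 :> R)%R by lra.
  have := mulr_ge0 C0 hd; rewrite !mulrBr mulr1 => hp.
  have hC : C = (W + r + 1)%R by [].
  clearbody C; lra.
apply: le_trans (leeD2l _ HM) _.
by rewrite -EFinN -EFinD lee_fin; lra.
Qed.

Lemma P0_P1 : inner_radius V = +oo ->
  forall I : {set 'I_n}, I != finset.set0 -> ~ left_invariant T I.
Proof.
move=> H0 I HI Hinv.
pose x1 := fun j => if j \in I then (0 : \bar R) else -oo.
have Hp : part I x1.
  split; first by move=> j; rewrite /x1 /in_Rmax; case: ifP.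
  by apply/setP => j; rewrite inE /x1; case: (j \in I).
have [_ Hs] : part I (T x1) by apply: Hinv; exists x1.
have FK1 : forall i, i \in I -> forall k, V i k != -oo ->
    exists j, [/\ j != i, V j k != -oo & j \in I].
  move=> i iI k vk.
  have : i \in supp (T x1) by rewrite Hs.
  rewrite inE => Hne; have [j [ji vj xj]] := Top_fin_ex _ _ _ Hne vk.
  by exists j; split => //; move: xj; rewrite /x1; case: ifP.
have [W [W0 HW]] := Wbound.
have : (W + 1)%:E < inner_radius V by rewrite H0 ltey.
move/ereal_sup_gt => [_ [r [r0 [a Ha]] <-]]; rewrite lte_fin => Hr.
have HT := col_ball_T a r r0 Ha.
have [i0 [i0I Hmax]] := argmax_ex I a HI.
have Hlow : (- a i0 - W)%:E <= T (fun j => (- a j)%:E) i0.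
  rewrite /Top; apply/bigmin_geP; split; first exact: leey.
  move=> k vk; have [j [ji vj jI]] := FK1 i0 i0I k vk.
  have [vi Evi] := finV vk; have [v Ev] := finV vj.
  have : V j k + (- a j)%:E <= \big[maxe/-oo]_(j0 < n | j0 != i0) (V j0 k + (- a j0)%:E).
    by apply/bigmax_geP; right; exists j.
  rewrite Ev -EFinD => Hm; apply: le_trans _ (leeD2l _ Hm).
  rewrite Evi -EFinN -EFinD lee_fin.
  have := HW i0 j k; rewrite Evi Ev /= => Hw.
  have := ler_norm (vi - v); rewrite distrC => Hn.
  have := Hmax j jI; lra.
have := le_trans Hlow (HT i0); rewrite lee_fin; lra.
Qed.


Lemma sh1 (a b : R) (M : \bar R) : (a + b)%:E <= M -> a%:E <= (- b)%:E + M.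
Proof.
case: M => [x||] h.
- by rewrite -EFinD lee_fin; rewrite lee_fin in h; lra.
- by rewrite addey // leey.
- by move: h; rewrite leeNy_eq.
Qed.

Lemma sh2 (a b : R) (M : \bar R) : a%:E <= (- b)%:E + M -> (a + b)%:E <= M.
Proof.
case: M => [x||] h.
- by rewrite lee_fin; rewrite -EFinD lee_fin in h; lra.
- by rewrite leey.
- by move: h; rewrite addeNy leeNy_eq.
Qed.

Lemma sh3 (a b : R) (M : \bar R) : (- b)%:E + M <= a%:E -> M <= (a + b)%:E.
Proof.
case: M => [x||] h.
- by rewrite lee_fin; rewrite -EFinD lee_fin in h; lra.
- by move: h; rewrite addey // leye_eq.
- by rewrite leNye.
Qed.


Section Eig.
Variable K : {set 'I_n}.
Hypotheses (FK1 : forall i, i \in K -> forall k, V i k != -oo ->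
    exists j, [/\ j != i, V j k != -oo & j \in K])
  (FK2 : forall i, i \notin K -> exists k, V i k != -oo /\
    forall j, j != i -> V j k != -oo -> j \notin K)
  (i0 : 'I_n) (i0K : i0 \in K) (H3 : rho T = -oo).

Definition Ep (s : {ffun 'I_n -> 'I_p}) : rel 'I_n :=
  fun i j => [&& i \in K, j \in K, j != i & V j (s i) != -oo].
Definition wp (s : {ffun 'I_n -> 'I_p}) i j : R :=
  (fine (V j (s i)) - fine (V i (s i)))%R.
Definition validp (s : {ffun 'I_n -> 'I_p}) : bool :=
  [forall i, (i \in K) ==> (V i (s i) != -oo)].
Definition lamp s := lam R n (Ep s) (wp s).
Definition potp s := pot R n (Ep s) (wp s).

Lemma Ep_K s i j : Ep s i j -> (fun x => x \in K) j.
Proof. by case/and4P. Qed.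

Lemma Ep_s s : validp s -> forall i, (fun x => x \in K) i -> exists j, Ep s i j.
Proof.
move=> /forallP sv i iK; have vk : V i (s i) != -oo by have := sv i; rewrite iK.
have [j [ji vj jK]] := FK1 i iK _ vk.
by exists j; rewrite /Ep iK jK ji vj.
Qed.

Lemma lamp_min s lam' (u : 'I_n -> R) : validp s ->
  (forall i j, Ep s i j -> (wp s i j + u j <= lam' + u i)%R) -> (lamp s <= lam')%R.
Proof.
move=> sv Hu.
exact: (lam_min _ _ _ _ (fun x => x \in K) (Ep_K s) (Ep_s s sv) i0 i0K _ _ Hu).
Qed.

Lemma potp_ineq s : validp s -> forall i j, Ep s i j ->
  (wp s i j + potp s j <= lamp s + potp s i)%R.
Proof.
move=> sv i j Eij.
exact: (pot_ineq _ _ _ _ (fun x => x \in K) (Ep_K s) (Ep_s s sv) i0 i0K _ _ Eij).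
Qed.

Lemma exists_min : exists s, validp s /\ forall s', validp s' -> (lamp s <= lamp s')%R.
Proof.
have [k0 _] := Hrow i0.
pose s0 : {ffun 'I_n -> 'I_p} := [ffun i => odflt k0 [pick k | V i k != -oo]].
have Hs0 : validp s0.
  apply/forallP => i; apply/implyP => _; rewrite ffunE.
  case: pickP => [k vk //|none].
  by have [k vk] := Hrow i; rewrite none in vk.
have [s sv Heq] := @eq_bigmin _ _ _ (+oo : \bar R) s0 validp
  (fun s => (lamp s)%:E) Hs0 (fun _ _ => leey _).
exists s; split => // s' Hs'.
by rewrite -lee_fin -Heq; apply/bigmin_leP; right; exists s'.
Qed.

Lemma eig_contra : False.
Proof.
have [s [sv smin]] := exists_min.
set lm := lamp s.
set u := potp s.
pose U i := if i \in K then (u i)%:E else -oo.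
have HU : forall i, T U i <= lm%:E + U i.
  move=> i; case: (boolP (i \in K)) => iK.
  - have vk : V i (s i) != -oo by move/forallP: sv => /(_ i); rewrite iK.
    have [vi Evi] := finV vk.
    rewrite {2}/U iK /Top; apply/bigmin_leP; right; exists (s i) => //.
    rewrite Evi.
    have HM : \big[maxe/-oo]_(j < n | j != i) (V j (s i) + U j) <= (lm + u i + vi)%:E.
      apply/bigmax_leP; split; first exact: leNye.
      move=> j ji; rewrite /U; case: (boolP (j \in K)) => jK; last by rewrite addeNy leNye.
      case: (eqVneq (V j (s i)) -oo) => [->|vj]; first by rewrite addNye leNye.
      have [v Ev] := finV vj.
      have Ej : Ep s i j by rewrite /Ep iK jK ji vj.
      have := potp_ineq s sv i j Ej; rewrite /wp Ev Evi /= -/u -/lm => h.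
      rewrite -EFinD lee_fin; lra.
    apply: le_trans (leeD2l _ HM) _; rewrite -EFinN -!EFinD lee_fin; lra.
  - have [k [vk Hk]] := FK2 i iK.
    rewrite (Top_ninf_of U i k vk) ?leNye // => j ji vj.
    by rewrite /U (negbTE (Hk j ji vj)).
pose G (x : 'I_n -> \bar R) := fun i => T x i - lm%:E.
pose v m := iter m G U.
have Tv : forall m i, T (v m) i = lm%:E + v m.+1 i.
  by move=> m i; rewrite /= /G addeC subeK.
have dec1 : forall m i, v m.+1 i <= v m i.
  elim=> [|m IH] i.
  - by rewrite /= /G leeBlDl // HU.
  - change (G (v m.+1) i <= G (v m) i); rewrite /G; apply: leeD2r.
    by apply: Top_mono => j; exact: IH.
have decle : forall m m' i, (m <= m')%N -> v m' i <= v m i.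
  move=> m m' i /subnK <-; elim: (m' - m)%N => [|d IH]; first by rewrite add0n.
  by rewrite addSn; apply: le_trans (dec1 _ i) IH.
have vU : forall m i, v m i <= U i by move=> m i; exact: (decle 0%N m i (leq0n _)).
have voff : forall m i, i \notin K -> v m i = -oo.
  by move=> m i iK; apply/eqP; rewrite -leeNy_eq; have := vU m i; rewrite /U (negbTE iK).
have vfin : forall m i, i \in K -> v m i != -oo.
  elim=> [|m IH] i iK; first by rewrite /= /U iK.
  change (G (v m) i != -oo); rewrite /G.
  have : T (v m) i != -oo.
    apply: Top_fin_of => k vk; have [j [ji vj jK]] := FK1 i iK _ vk.
    by exists j; split => //; apply: IH.
  by case: (T (v m) i).
have vR : forall m, Rmax_vec (v m).
  move=> m i; rewrite /in_Rmax; apply/negP => /eqP h.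
  by have := vU m i; rewrite h leye_eq /U; case: (i \in K).
case: (pselect (exists i, i \in K /\ exists c : R, forall m, c%:E <= v m i)) =>
  [[i1 [i1K [c Hc]]] | Hno].
- pose vi i := ereal_inf [set v m i | m in setT].
  have vi_le : forall m i, vi i <= v m i.
    by move=> m i; apply: ereal_inf_lbound; exists m.
  have vi_ge : forall i (c0 : \bar R), (forall m, c0 <= v m i) -> c0 <= vi i.
    by move=> i c0 H; apply/ereal_infP => _ [m _ <-]; exact: H.
  have viR : Rmax_vec vi.
    move=> i; rewrite /in_Rmax; apply/negP => /eqP h.
    by have := vi_le 0%N i; rewrite h leye_eq (negbTE (vR 0%N i)).
  have Heig : T vi = (fun i => lm%:E + vi i).
    apply: funext => i; apply/eqP; rewrite eq_le; apply/andP; split.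
    + have H : forall m, T vi i - lm%:E <= v m i.
        move=> m; rewrite leeBlDl //.
        apply: le_trans (Top_mono _ _ (fun j => vi_le m j) i) _.
        by rewrite Tv; apply: leeD2l; exact: dec1.
      by have := vi_ge i _ H; rewrite leeBlDl.
    + case: (eqVneq (vi i) -oo) => [->|vfi]; first by rewrite addeNy leNye.
      have [xv Exv] : exists xv : R, vi i = xv%:E.
        move: (viR i) vfi; rewrite /in_Rmax; case: (vi i) => [x||] // _ _.
        by exists x.
      rewrite Exv /Top; apply/bigmin_geP; split; first exact: leey.
      move=> k vk; have [vk' Evk] := finV vk; rewrite Evk.
      set cv := (lm + xv)%R.
      have Hm : forall m, exists j, j != i /\ (cv + vk')%:E <= V j k + v m j.
        move=> m.
        have h1 : (cv + vk')%:E <= \big[maxe/-oo]_(j < n | j != i) (V j k + v m j).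
          have h2 : T (v m) i <= - V i k + \big[maxe/-oo]_(j < n | j != i) (V j k + v m j).
            by apply/bigmin_leP; right; exists k.
          have h3 : lm%:E + vi i <= lm%:E + v m.+1 i by apply: leeD2l; apply: vi_le.
          rewrite Tv in h2; have h4 := le_trans h3 h2.
          rewrite Exv Evk -EFinD in h4; exact: sh2 _ _ _ h4.
        move/bigmax_geP: h1 => [|[j ji Hj]]; first by rewrite leeNy_eq.
        by exists j.
      have [j [ji Hj]] : exists j, j != i /\ forall m, (cv + vk')%:E <= V j k + v m j.
        case: (pselect (exists j, j != i /\ forall m, (cv + vk')%:E <= V j k + v m j)) => //.
        move=> Hno'; exfalso.
        have : forall j, exists m, j != i -> ~~ ((cv + vk')%:E <= V j k + v m j).
          move=> j; case: (eqVneq j i) => [->|ji]; first by exists 0%N.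
          case: (pselect (exists m, ~~ ((cv + vk')%:E <= V j k + v m j))) => [[m Hm']|Hn].
            by exists m.
          exfalso; apply: Hno'; exists j; split => // m.
          by case: (boolP ((cv + vk')%:E <= V j k + v m j)) => // h; exfalso; apply: Hn; exists m.
        move=> /choice [mj Hmj].
        have [j [ji Hj]] := Hm (\max_(j < n) mj j).
        have := Hmj j ji; apply/negP; rewrite negbK.
        apply: le_trans Hj _; apply: leeD2l; apply: decle; exact: leq_bigmax.
      have vj : V j k != -oo.
        by apply/negP => /eqP h; have := Hj 0%N; rewrite h addNye leeNy_eq.
      have [vj' Evj] := finV vj.
      have Hvj : (cv + vk' - vj')%:E <= vi j.
        apply: vi_ge => m; have := Hj m; rewrite Evj => h.
        by rewrite EFinB leeBlDl.
      apply: sh1; apply: le_trans _ (_ : V j k + vi j <= _); last first.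
        by apply/bigmax_geP; right; exists j.
      rewrite Evj; apply: le_trans (leeD2l _ Hvj); by rewrite -EFinD lee_fin /cv; lra.
  have : lm%:E <= rho T.
    apply: ereal_sup_ubound; split; first by [].
    exists vi; split => //; split => //; exists i1.
    apply/negP => /eqP h; have := vi_ge i1 _ Hc; by rewrite h leeNy_eq.
  by rewrite H3 leeNy_eq.
- have Hm : forall i, exists m, i \in K -> v m i < (u i - 1)%:E.
    move=> i; case: (boolP (i \in K)) => iK; last by exists 0%N.
    case: (pselect (exists m, v m i < (u i - 1)%:E)) => [[m hm]|Hn]; first by exists m.
    exfalso; apply: Hno; exists i; split => //; exists (u i - 1)%R => m.
    by rewrite leNgt; apply/negP => h; apply: Hn; exists m.
  move/choice: Hm => [mi Hmi].
  pose M := (\max_(i < n) mi i).+1.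
  have M0 : (0 < M)%N by [].
  have HvM : forall i, v M i + 1%:E <= U i.
    move=> i; case: (boolP (i \in K)) => iK; last by rewrite voff // addNye leNye.
    have h := decle (mi i) M i (leqW (leq_bigmax i)).
    have h2 : v M i < (u i - 1)%:E by apply: le_lt_trans h (Hmi i iK).
    rewrite /U iK; move: h2; case: (v M i) => [x||] //.
      by rewrite lte_fin -EFinD lee_fin => h3; lra.
    by rewrite addNye leNye.
  pose d : R := (M%:R)^-1%R.
  have d0 : (0 < d)%R by rewrite /d invr_gt0 ltr0n.
  have Md : (M%:R * d = 1)%R by rewrite /d mulfV // pnatr_eq0 -lt0n.
  pose ww i := \big[mine/+oo]_(t < M) (v t i + (t%:R * d)%:E).
  have ww_le : forall i (t : 'I_M), ww i <= v t i + (t%:R * d)%:E.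
    by move=> i t; apply/bigmin_leP; right; exists t.
  have ww_eq : forall i, exists t : 'I_M, ww i = v t i + (t%:R * d)%:E.
    move=> i; have [t _ Ht] := @eq_bigmin _ _ _ (+oo : \bar R) (Ordinal M0) predT
      (fun t : 'I_M => v t i + (t%:R * d)%:E) erefl (fun _ _ => leey _).
    by exists t.
  have ww_fin : forall i, i \in K -> exists wr : R, ww i = wr%:E.
    move=> i iK; have [t ->] := ww_eq i.
    move: (vfin t i iK) (vR t i); rewrite /in_Rmax; case: (v t i) => [x||] // _ _.
    by exists (x + t%:R * d)%R.
  have Tww : forall i, T ww i <= (lm - d)%:E + ww i.
    move=> i.
    have H1 : forall t : nat, (t < M)%N -> T ww i <= lm%:E + v t.+1 i + (t%:R * d)%:E.
      move=> t tM.
      have := Top_mono ww (fun j => v t j + (t%:R * d)%:E) (fun j => ww_le j (Ordinal tM)) i.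
      by rewrite Top_shift Tv.
    have [[[|t'] tM] Et] := ww_eq i; rewrite Et.
    + have h := H1 M.-1 (leqnn M).
      have HM1 : ((M.-1)%:R * d = 1 - d :> R)%R.
        have hM : (M%:R = (M.-1)%:R + 1 :> R)%R by rewrite natr1 prednK.
        move: Md; rewrite hM mulrDl mul1r; lra.
      have key : lm%:E + v M i + ((M.-1)%:R * d)%:E <= (lm - d)%:E + U i.
        move: (HvM i); rewrite HM1; case: (v M i) => [x||]; case: (U i) => [y||] h';
          rewrite ?addeNy ?addNye ?leNye ?addey ?leey //.
        by rewrite -!EFinD !lee_fin in h' *; lra.
      have e0 : ((Ordinal tM : nat)%:R * d = 0 :> R)%R by rewrite /= mul0r.
      rewrite e0 adde0; exact: le_trans h key.
    + have key : lm%:E + v t'.+1 i + (t'%:R * d)%:E <=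
          (lm - d)%:E + (v t'.+1 i + (t'.+1%:R * d)%:E).
        have -> : (t'.+1%:R * d = t'%:R * d + d :> R)%R by rewrite -natr1 mulrDl mul1r.
        case: (v t'.+1 i) => [x||].
        * by rewrite -!EFinD lee_fin; lra.
        * by rewrite [X in _ <= _ + X]addye // addey // leey.
        * by rewrite addeNy addNye leNye.
      exact: le_trans (H1 t' (ltnW tM)) key.
  have Hk : forall i, exists k : 'I_p, i \in K -> V i k != -oo /\
      (- V i k + \big[maxe/-oo]_(j < n | j != i) (V j k + ww j) <= (lm - d)%:E + ww i).
    move=> i; case: (boolP (i \in K)) => iK; last by exists (s i).
    have := Tww i; rewrite /Top => /bigmin_leP [|[k vk Hk]].
      by have [wr ->] := ww_fin i iK; rewrite -EFinD leye_eq.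
    by exists k.
  move/choice: Hk => [sf Hsf].
  pose s' : {ffun 'I_n -> 'I_p} := [ffun i => sf i].
  have sv' : validp s'.
    apply/forallP => i; apply/implyP => iK; rewrite ffunE.
    by have [] := Hsf i iK.
  have := lamp_min s' (lm - d) (fun i => fine (ww i)) sv'.
  have := smin s' sv'; rewrite -/lm => h1 h2.
  suff : (lamp s' <= lm - d)%R by lra.
  apply: h2 => i j /and4P [iK jK ji vj].
  rewrite ffunE in vj; rewrite /wp !ffunE.
  have [vk Hki] := Hsf i iK.
  have [vi Evi] := finV vk; have [v' Ev] := finV vj.
  have [wi Ewi] := ww_fin i iK; have [wj Ewj] := ww_fin j jK.
  have h3 : V j (sf i) + ww j <= \big[maxe/-oo]_(j0 < n | j0 != i) (V j0 (sf i) + ww j0).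
    by apply/bigmax_geP; right; exists j.
  rewrite Evi Ewi -EFinD in Hki.
  have h4 := sh3 _ _ _ Hki.
  have h5 := le_trans h3 h4; rewrite Ev Ewj -EFinD lee_fin in h5.
  rewrite Ev Evi Ewi Ewj /=; lra.
Qed.

End Eig.


Lemma P3_P1 : rho T = -oo ->
  forall I : {set 'I_n}, I != finset.set0 -> ~ left_invariant T I.
Proof.
move=> H3 K HK Hinv.
pose x1 := fun j => if j \in K then (0 : \bar R) else -oo.
have Hp : part K x1.
  split; first by move=> j; rewrite /x1 /in_Rmax; case: ifP.
  by apply/setP => j; rewrite inE /x1; case: (j \in K).
have [_ Hs] : part K (T x1) by apply: Hinv; exists x1.
have FK1 : forall i, i \in K -> forall k, V i k != -oo ->
    exists j, [/\ j != i, V j k != -oo & j \in K].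
  move=> i iK k vk.
  have : i \in supp (T x1) by rewrite Hs.
  rewrite inE => Hne; have [j [ji vj xj]] := Top_fin_ex _ _ _ Hne vk.
  by exists j; split => //; move: xj; rewrite /x1; case: ifP.
have FK2 : forall i, i \notin K -> exists k, V i k != -oo /\
    forall j, j != i -> V j k != -oo -> j \notin K.
  move=> i iK.
  have : i \notin supp (T x1) by rewrite Hs.
  rewrite inE negbK => /eqP /Top_ninf_ex [k [vk Hk]].
  exists k; split => // j ji vj; have := Hk j ji vj.
  by rewrite /x1; case: ifP.
have [i0 i0K] := set0Pn _ HK.
exact: (eig_contra K FK1 FK2 i0 i0K H3).
Qed.

End Game.

Theorem corollary3p7 (R : realType) (n p : nat) (V : 'I_n -> 'I_p -> \bar R)
  (HV : forall i k, V i k != +oo)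
  (Hrow : forall i, exists k, V i k != -oo)
  (Hcol : forall k, exists i, V i k != -oo) :
  [<-> inner_radius V = +oo;
       (forall I : {set 'I_n}, I != finset.set0 -> ~ left_invariant (Top V) I);
       iter n (Top V) (fun _ => 0) = (fun _ => -oo);
       rho (Top V) = -oo].
Proof.
tfae.
- by apply: P0_P1.
- by apply: P1_P2.
- by apply: P2_P3.
- move=> H3; apply: P2_P0 => //; apply: P1_P2 => //; by apply: P3_P1.
Qed.
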